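(* Let $\mathcal{A}\subset\mathbb{N}$ be an alphabet. If the semigroup $\Gamma_{\mathcal{A}}$ does not have everywhere strong approximation, then there exist an integer $k^{\ast}\ge 2$ and a residue $r \pmod{k^{\ast}}$ such that $\mathcal{A}\subseteq r+k^{\ast}\mathbb{Z}$.
   Context: For $a\in\mathbb{N}$ let $\gamma_a=\begin{pmatrix}0&1\\1&a\end{pmatrix}$. $\mathcal{G}_{\mathcal{A}}\subset \mathrm{GL}_2(\mathbb{Z})$ is the semigroup generated by $\gamma_a$, $a\in\mathcal{A}$, and $\Gamma_{\mathcal{A}}\subset\mathrm{SL}_2(\mathbb{Z})$ is its determinant-one subsemigroup, generated by the products $\gamma_a\gamma_{a'}$, $a,a'\in\mathcal{A}$. $\Gamma_{\mathcal{A}}$ has everywhere strong approximation if for every $q\in\mathbb{N}$ the reduction of $\Gamma_{\mathcal{A}}$ modulo $q$ equals $\mathrm{SL}_2(\mathbb{Z}/q\mathbb{Z})$. *)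

(* Defs.v *)
From mathcomp Require Import all_boot all_order all_algebra.
Set Implicit Arguments. Unset Strict Implicit. Unset Printing Implicit Defensive.
Import GRing.Theory Num.Theory.
Local Open Scope ring_scope.

Definition gamma (a : nat) : 'M[int]_2 :=
  \matrix_(i < 2, j < 2)
    if (i == 0 :> nat) && (j == 0 :> nat) then 0
    else if (i == 1 :> nat) && (j == 1 :> nat) then a%:Z else 1.

Inductive GammaA (A : nat -> Prop) : 'M[int]_2 -> Prop :=
  | GammaA_gen a a' : A a -> A a' -> GammaA A (gamma a *m gamma a')
  | GammaA_mul g h : GammaA A g -> GammaA A h -> GammaA A (g *m h).

Definition mx_congr (q : nat) (M N : 'M[int]_2) : Prop :=
  forall i j : 'I_2, (M i j = N i j %[mod q%:Z])%Z.

(* Elements of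
   SL_2(Z/qZ) are represented by integer matrices M with det M = 1 mod q;
   equality of sets = (image contained in SL_2(Z/qZ)) and (surjectivity). *)
Definition reduction_is_SL2 (A : nat -> Prop) (q : nat) : Prop :=
  (forall g, GammaA A g -> (\det g = 1 %[mod q%:Z])%Z) /\
  (forall M : 'M[int]_2, (\det M = 1 %[mod q%:Z])%Z ->
     exists2 g, GammaA A g & mx_congr q g M).

Definition everywhere_strong_approx (A : nat -> Prop) : Prop :=
  forall q : nat, (0 < q)%N -> reduction_is_SL2 A q.

(* Main.v *)
Require Import Defs.
From mathcomp Require Import all_boot all_order all_algebra.
From mathcomp Require Import ring.
Set Implicit Arguments. Unset Strict Implicit. Unset Printing Implicit Defensive.
Import GRing.Theory Num.Theory.
Local Open Scope ring_scope.

Definition mk (a b c d : int) : 'M[int]_2 :=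
  \matrix_(i < 2, j < 2) if i == 0 then (if j == 0 then a else b) else (if j == 0 then c else d).



Lemma ord2P (i : 'I_2) : i = 0 \/ i = 1.
Proof. case: i => [[|[|i]] Hi] //; [left|right]; exact: val_inj. Qed.

Lemma mk_eta (M : 'M[int]_2) : M = mk (M 0 0) (M 0 1) (M 1 0) (M 1 1).
Proof.
apply/matrixP => i j; rewrite !mxE.
by case: (ord2P i) => ->; case: (ord2P j) => ->.
Qed.

Lemma mk_mul a b c d a' b' c' d' :
  mk a b c d *m mk a' b' c' d' =
  mk (a*a'+b*c') (a*b'+b*d') (c*a'+d*c') (c*b'+d*d').
Proof.
apply/matrixP => i j; rewrite !mxE !big_ord_recl big_ord0 !mxE /=. rewrite addr0.
by case: (ord2P i) => ->; case: (ord2P j) => ->.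
Qed.

Lemma det_mk a b c d : \det (mk a b c d) = a * d - b * c.
Proof.
rewrite (expand_det_row _ 0) !big_ord_recl big_ord0 /cofactor !mxE /=.
rewrite !det_mx11 !mxE /=. rewrite /bump /=. ring.
Qed.

Definition cg (q : nat) (X Y : 'M[int]_2) := forall i j, (q%:Z %| X i j - Y i j)%Z.

Lemma cg_refl q X : cg q X X.
Proof. by move=> i j; rewrite subrr dvdz0. Qed.

Lemma cg_sym q X Y : cg q X Y -> cg q Y X.
Proof. by move=> h i j; rewrite -opprB rpredN. Qed.

Lemma cg_trans q X Y Z : cg q X Y -> cg q Y Z -> cg q X Z.
Proof.
move=> h1 h2 i j; have -> : X i j - Z i j = (X i j - Y i j) + (Y i j - Z i j) by ring.
exact: rpredD.
Qed.

Lemma dv_mulmx_l q (Z D : 'M[int]_2) : (forall i j, (q%:Z %| D i j)%Z) ->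
  forall i j, (q%:Z %| (Z *m D) i j)%Z.
Proof.
move=> h i j; rewrite !mxE !big_ord_recl big_ord0 addr0.
by apply: rpredD; apply: dvdz_mull.
Qed.

Lemma dv_mulmx_r q (Z D : 'M[int]_2) : (forall i j, (q%:Z %| D i j)%Z) ->
  forall i j, (q%:Z %| (D *m Z) i j)%Z.
Proof.
move=> h i j; rewrite !mxE !big_ord_recl big_ord0 addr0.
by apply: rpredD; apply: dvdz_mulr.
Qed.

Lemma cgMl q Z X Y : cg q X Y -> cg q (Z *m X) (Z *m Y).
Proof.
move=> h i j.
have -> : (Z *m X) i j - (Z *m Y) i j = (Z *m (X - Y)) i j by rewrite mulmxBr !mxE.
apply: dv_mulmx_l => i' j'; rewrite !mxE; exact: h.
Qed.

Lemma cgMr q Z X Y : cg q X Y -> cg q (X *m Z) (Y *m Z).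
Proof.
move=> h i j.
have -> : (X *m Z) i j - (Y *m Z) i j = ((X - Y) *m Z) i j by rewrite mulmxBl !mxE.
apply: dv_mulmx_r => i' j'; rewrite !mxE; exact: h.
Qed.

Lemma cgM q X X' Y Y' : cg q X X' -> cg q Y Y' -> cg q (X *m Y) (X' *m Y').
Proof. move=> h1 h2; apply: (cg_trans (cgMr _ h1)); exact: cgMl. Qed.

Lemma gamma_mk a : gamma a = mk 0 1 1 a%:Z.
Proof.
apply/matrixP => i j; rewrite !mxE.
by case: (ord2P i) => ->; case: (ord2P j) => ->.
Qed.

Lemma Gamma_det A g : GammaA A g -> \det g = 1.
Proof.
elim=> [a a' _ _|g' h _ ih1 _ ih2]; rewrite det_mulmx.
  by rewrite !gamma_mk !det_mk; ring.
by rewrite ih1 ih2 mulr1.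
Qed.

Lemma Gamma_pow A g n : GammaA A g -> GammaA A (g ^+ n.+1).
Proof.
move=> hg; elim: n => [|n ih]; first by rewrite expr1.
rewrite exprSr; exact: GammaA_mul.
Qed.

From Stdlib Require Import Classical.

Lemma pow_shift q (g : 'M[int]_2) i j : \det g = 1 -> (i < j)%N ->
  cg q (g ^+ i) (g ^+ j) -> cg q 1 (g ^+ (j - i)).
Proof.
move=> hd hij h.
set a := \adj g.
have ag : a * g = 1 by rewrite /a -mulmxE mul_adj_mx hd.
have ga : g * a = 1 by rewrite /a -mulmxE mul_mx_adj hd.
have cm : GRing.comm a g by rewrite /GRing.comm ag ga.
have e1 : a ^+ i * g ^+ i = 1 by rewrite -exprMn_comm // ag expr1n.
have := cgMl (a ^+ i) h.
rewrite mulmxE e1.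
have -> : g ^+ j = g ^+ i * g ^+ (j - i) by rewrite -exprD subnKC // ltnW.
by rewrite mulrA e1 mul1r.
Qed.

Definition rz (p : nat) (x : int) : nat := absz (x %% p.+1)%Z.

Definition red (p : nat) (X : 'M[int]_2) : ('I_p.+1 * 'I_p.+1) * ('I_p.+1 * 'I_p.+1) :=
  ((inord (rz p (X 0 0)), inord (rz p (X 0 1))),
   (inord (rz p (X 1 0)), inord (rz p (X 1 1)))).

Lemma red_ent p (x y : int) :
  (inord (rz p x) : 'I_p.+1) = inord (rz p y) ->
  (p.+1%:Z %| x - y)%Z.
Proof.
move=> /(congr1 val) /=.
have lt z : (rz p z < p.+1)%N.
  have h1 := ltz_mod z (d := p.+1%:Z) isT.
  have h0 := modz_ge0 z (d := p.+1%:Z) isT.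
  by rewrite -ltz_nat /rz gez0_abs.
rewrite !inordK // /rz => e.
rewrite -eqz_mod_dvd; apply/eqP.
have h0 z := modz_ge0 z (d := p.+1%:Z) isT.
by rewrite -(gez0_abs (h0 x)) -(gez0_abs (h0 y)) e.
Qed.

Lemma red_cg p X Y : red p X = red p Y -> cg p.+1 X Y.
Proof.
rewrite /red => [[e00 e01 e10 e11]] i j.
by case: (ord2P i) => ->; case: (ord2P j) => ->; apply: red_ent.
Qed.

Lemma pigeon q (g : 'M[int]_2) : (0 < q)%N -> \det g = 1 ->
  exists m, (0 < m)%N /\ cg q (g ^+ m) 1.
Proof.
case: q => // p _ hd.
pose N := #|{: ('I_p.+1 * 'I_p.+1) * ('I_p.+1 * 'I_p.+1)}|.
pose f := fun k : 'I_N.+1 => red p (g ^+ k).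
have ninj : ~ injective f.
  by move=> inj; have := @leq_card _ _ f inj; rewrite card_ord ltnn.
have [i [j [Hf Hne]]] : exists i j, f i = f j /\ i <> j.
  apply: NNPP => H; apply: ninj => i j Hf; apply: NNPP => Hne; apply: H.
  by exists i, j.
have Hne' : (i : nat) <> j by move=> e; apply: Hne; exact: val_inj.
have hc := red_cg Hf.
case: (ltngtP i j) => [lt|lt|e]; last by [].
- exists (j - i)%N; split; first by rewrite subn_gt0.
  by apply: cg_sym; apply: pow_shift.
- exists (i - j)%N; split; first by rewrite subn_gt0.
  by apply: cg_sym; apply: pow_shift => //; apply: cg_sym.
Qed.

Lemma Gamma_inv A q g : (0 < q)%N -> GammaA A g ->
  exists h, [/\ GammaA A h, cg q (h *m g) 1 & cg q (g *m h) 1].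
Proof.
move=> q0 hg.
have [[|m'] [// _ hm]] := pigeon q0 (Gamma_det hg).
exists (g ^+ (m' + m'.+1)); split.
- by rewrite addnS; apply: Gamma_pow.
- rewrite mulmxE -exprSr -addSn exprD.
  have := cgM hm hm; by rewrite mulmxE mul1r.
- rewrite mulmxE -exprS -addSn exprD.
  have := cgM hm hm; by rewrite mulmxE mul1r.
Qed.

Definition PP A q (M : 'M[int]_2) := exists g, GammaA A g /\ cg q g M.

Lemma PP_mul A q M N : PP A q M -> PP A q N -> PP A q (M *m N).
Proof.
move=> [g [hg cg1]] [h [hh cg2]]; exists (g *m h); split.
  exact: GammaA_mul. exact: cgM.
Qed.

Lemma PP_cg A q M N : PP A q M -> cg q M N -> PP A q N.
Proof. move=> [g [hg c]] c'; exists g; split => //; exact: cg_trans c'. Qed.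

Lemma PP_inv A q M M' : (0 < q)%N -> PP A q M -> M *m M' = 1%:M -> PP A q M'.
Proof.
move=> q0 [g [hg c]] e.
have [h [hh c1 c2]] := Gamma_inv q0 hg.
exists h; split => //.
have -> : h = h *m (M *m M') by rewrite e mulmx1.
apply: (@cg_trans _ _ (h *m g *m M')).
  rewrite mulmxA; apply: cgMr; apply: cgMl; exact: cg_sym.
have := cgMr M' c1; by rewrite mul1mx.
Qed.

Lemma PP_one A q a0 : (0 < q)%N -> A a0 -> PP A q 1%:M.
Proof.
move=> q0 ha.
have hg := GammaA_gen ha ha.
have [h [hh c1 c2]] := Gamma_inv q0 hg.
exists (h *m (gamma a0 *m gamma a0)); split => //; exact: GammaA_mul.
Qed.

Definition U (t : int) := mk 1 t 0 1.
Definition L (t : int) := mk 1 0 t 1.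

Lemma PP_U_diff A q a c : (0 < q)%N -> A a -> A c -> PP A q (U (a%:Z - c%:Z)).
Proof.
move=> q0 ha hc.
have hg := GammaA_gen hc hc.
have [h [hh c1 c2]] := Gamma_inv q0 hg.
exists (h *m (gamma c *m gamma a)); split.
  by apply: GammaA_mul => //; apply: GammaA_gen.
have -> : gamma c *m gamma a = (gamma c *m gamma c) *m U (a%:Z - c%:Z).
  by rewrite -mulmxA !gamma_mk /U !mk_mul; congr mk; ring.
rewrite mulmxA; have := cgMr (U (a%:Z - c%:Z)) c1; by rewrite mul1mx.
Qed.

Lemma PP_L_diff A q a c : (0 < q)%N -> A a -> A c -> PP A q (L (a%:Z - c%:Z)).
Proof.
move=> q0 ha hc.
have hg := GammaA_gen hc hc.
have [h [hh c1 c2]] := Gamma_inv q0 hg.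
exists ((gamma a *m gamma c) *m h); split.
  by apply: GammaA_mul => //; apply: GammaA_gen.
have -> : gamma a *m gamma c = L (a%:Z - c%:Z) *m (gamma c *m gamma c).
  by rewrite !gamma_mk /L !mk_mul; congr mk; ring.
rewrite -mulmxA; have := cgMl (L (a%:Z - c%:Z)) c2; by rewrite mulmx1.
Qed.

From Stdlib Require Import ClassicalEpsilon.

Lemma subgroup_one A q (F : int -> 'M[int]_2) : (0 < q)%N ->
  (forall s t, F s *m F t = F (s + t)) -> F 0 = 1%:M ->
  (forall s t, (q%:Z %| s - t)%Z -> cg q (F s) (F t)) ->
  (forall a c, A a -> A c -> PP A q (F (a%:Z - c%:Z))) ->
  ~ (exists k : nat, (2 <= k)%N /\
       exists r : int, forall a, A a -> (a%:Z = r %[mod k%:Z])%Z) ->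
  forall t, PP A q (F t).
Proof.
move=> q0 Fadd F0 Fcg Hd hN.
have [a0 ha0] : exists a0, A a0.
  apply: NNPP => H; apply: hN; exists 2%N; split => //; exists 0 => a ha.
  by exfalso; apply: H; exists a.
have P1 : PP A q (F 0) by rewrite F0; exact: PP_one ha0.
have Pneg t : PP A q (F t) -> PP A q (F (- t)).
  by move=> h; apply: (PP_inv q0 h); rewrite Fadd subrr F0.
have Padd s t : PP A q (F s) -> PP A q (F t) -> PP A q (F (s + t)).
  by move=> h1 h2; rewrite -Fadd; exact: PP_mul.
have Pmult d : PP A q (F d) -> forall k : int, PP A q (F (k * d)).
  move=> hd.
  have Pn n : PP A q (F (n%:Z * d)).
    elim: n => [|n ih]; first by rewrite mul0r.
    by rewrite -addn1 PoszD mulrDl mul1r; apply: Padd.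
  by case=> n; [apply: Pn | rewrite NegzE mulNr; apply: Pneg].
have Pq : PP A q (F q%:Z).
  by apply: (PP_cg P1); apply: Fcg; rewrite sub0r rpredN dvdzz.
pose pb (n : nat) := if excluded_middle_informative (PP A q (F n%:Z) /\ (0 < n)%N)
  then true else false.
have pbP n : pb n <-> (PP A q (F n%:Z) /\ (0 < n)%N).
  by rewrite /pb; case: excluded_middle_informative.
have exq : exists n, pb n by exists q; apply/pbP.
case: (ex_minnP exq) => d /pbP [Pd d0] dmin.
have dvd t : PP A q (F t) -> (d%:Z %| t)%Z.
  move=> ht; apply/dvdz_mod0P.
  have hm : PP A q (F (t %% d%:Z)%Z).
    have -> : (t %% d%:Z)%Z = t + (- ((t %/ d%:Z)%Z * d%:Z)).
      by rewrite {2}(divz_eq t d%:Z); ring.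
    by apply: Padd => //; apply: Pneg; apply: Pmult.
  have dn0 : d%:Z != 0 by rewrite eqz_nat -lt0n.
  have hge := modz_ge0 t dn0.
  have hlt := ltz_mod t dn0.
  apply: contraTeq isT => hne.
  have hpos : (0 < absz (t %% d%:Z)%Z)%N.
    by rewrite absz_gt0.
  have := dmin (absz (t %% d%:Z)%Z).
  have hm2 : PP A q (F (absz (t %% d%:Z)%Z)%:Z) by rewrite gez0_abs.
  move=> /(_ (proj2 (pbP _) (conj hm2 hpos))) hle.
  have hlt2 : (absz (t %% d%:Z)%Z < d)%N.
    have hlt' : (t %% d%:Z)%Z < d%:Z by move: hlt; rewrite ger0_norm.
    by rewrite -ltz_nat gez0_abs.
  by move: hlt2; rewrite ltnNge hle.
case: (ltnP 1 d) => [d2 | d1].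
  exfalso; apply: hN; exists d; split => //; exists a0%:Z => a ha.
  by apply/eqP; rewrite eqz_mod_dvd; apply: dvd; exact: Hd.
have d_1 : d = 1%N by apply/eqP; rewrite eqn_leq d1 d0.
rewrite d_1 in Pd => t; rewrite -(mulr1 t); exact: Pmult Pd t.
Qed.


Lemma mk1 : 1%:M = mk 1 0 0 1 :> 'M[int]_2.
Proof.
apply/matrixP => i j; rewrite !mxE.
by case: (ord2P i) => ->; case: (ord2P j) => ->.
Qed.

Lemma cg_mk q a b c d a' b' c' d' :
  (q%:Z %| a - a')%Z -> (q%:Z %| b - b')%Z -> (q%:Z %| c - c')%Z -> (q%:Z %| d - d')%Z ->
  cg q (mk a b c d) (mk a' b' c' d').
Proof.
move=> h1 h2 h3 h4 i j; rewrite !mxE.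
by case: (ord2P i) => ->; case: (ord2P j) => ->.
Qed.

Lemma dv_of_eq q (x D k : int) : x = D * k -> (q %| D)%Z -> (q %| x)%Z.
Proof. by move=> -> h; apply: dvdz_mulr. Qed.

Lemma PP_mkL A q e f g h : (forall t, PP A q (L t)) ->
  (q%:Z %| e - 1)%Z -> (q%:Z %| f)%Z -> (q%:Z %| e * h - f * g - 1)%Z ->
  PP A q (mk e f g h).
Proof.
move=> HL h1 h2 h3; apply: (PP_cg (HL g)); apply: cg_sym; apply: cg_mk => //.
- by rewrite subr0.
- by rewrite subrr dvdz0.
- have -> : h - 1 = (e * h - f * g - 1) + (- ((e - 1) * h)) + f * g by ring.
  apply: rpredD; [apply: rpredD => //; rewrite rpredN; exact: dvdz_mulr | exact: dvdz_mulr].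
Qed.

Lemma PP_back A q M Y X : PP A q (M *m Y) -> PP A q X -> Y *m X = 1%:M -> PP A q M.
Proof.
move=> h1 h2 e; have -> : M = M *m Y *m X by rewrite -mulmxA e mulmx1.
exact: PP_mul.
Qed.

Lemma euclid_base A q (M : 'M[int]_2) : (forall t, PP A q (U t)) -> (forall t, PP A q (L t)) ->
  M 0 1 = 0 -> (q%:Z %| \det M - 1)%Z -> PP A q M.
Proof.
move=> HU HL hb; rewrite (mk_eta M) hb det_mk.
move: (M 0 0) (M 1 0) (M 1 1) => a c d hD.
apply: (PP_back (Y := U d *m L (1 - a) *m U (- (a * d))) (X := U (a * d) *m L (a - 1) *m U (- d))).
- rewrite /U /L !mk_mul; apply: PP_mkL => //.
  + by apply: (dv_of_eq (k := 1 - a)) hD; ring.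
  + by apply: (dv_of_eq (k := - (a * d) * (1 - a))) hD; ring.
  + by apply: (dv_of_eq (k := 1)) hD; ring.
- by apply: PP_mul; [apply: PP_mul|].
- by rewrite /U /L !mk_mul mk1; congr mk; ring.
Qed.

Definition e01 (M : 'M[int]_2) : int := M 0 1.

Lemma euclid A q : (forall t, PP A q (U t)) -> (forall t, PP A q (L t)) ->
  forall n (M : 'M[int]_2), (absz (e01 M) <= n)%N -> (q%:Z %| \det M - 1)%Z -> PP A q M.
Proof.
rewrite /e01; move=> HU HL; elim=> [|n IH] M hb hD.
  apply: euclid_base => //; apply/eqP; rewrite -absz_eq0 -leqn0 //.
have [b0|bn0] := eqVneq (M 0 1) 0; first exact: euclid_base.
move: hb hD; rewrite (mk_eta M).
rewrite [mk _ _ _ _ 0 1]mxE /=.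
move: (M 0 0) (M 0 1) (M 1 0) (M 1 1) bn0 => a b c d bn0 hb hD.
pose s := - (a %/ b)%Z.
apply: (PP_back (Y := L s *m mk 0 1 (-1) 0) (X := mk 0 (-1) 1 0 *m L (- s))).
- apply: IH.
  + rewrite /L !mk_mul mxE /=.
    have ea := divz_eq a b.
    have -> : a * (1 * 1 + 0 * 0) + b * (s * 1 + 1 * 0) = (a %% b)%Z.
      by rewrite {1}ea /s; ring.
    have h0 := modz_ge0 a bn0.
    have h1 := ltz_mod a bn0.
    have : (absz (a %% b)%Z < absz b)%N.
      by rewrite -ltz_nat gez0_abs // abszE.
    move=> hlt; rewrite -ltnS; exact: leq_trans hlt hb.
  + rewrite det_mk in hD; by rewrite det_mulmx /L !mk_mul !det_mk; apply: (dv_of_eq (k := 1)) hD; ring.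
- apply: PP_mul => //.
  have -> : mk 0 (-1) 1 0 = U (-1) *m L 1 *m U (-1) by rewrite /U /L !mk_mul; congr mk; ring.
  by apply: PP_mul; [apply: PP_mul|].
- by rewrite /L !mk_mul mk1; congr mk; ring.
Qed.

Lemma U_add s t : U s *m U t = U (s + t).
Proof. by rewrite /U mk_mul; congr mk; ring. Qed.
Lemma L_add s t : L s *m L t = L (s + t).
Proof. by rewrite /L mk_mul; congr mk; ring. Qed.

Theorem theoremB1 (A : nat -> Prop) (hA : forall a, A a -> (0 < a)%N) :
  ~ everywhere_strong_approx A ->
  exists k : nat, (2 <= k)%N /\
    exists r : int, forall a, A a -> (a%:Z = r %[mod k%:Z])%Z.
Proof.
move=> hnot; apply: NNPP => hN; apply: hnot => q q0; split.
  by move=> g hg; rewrite (Gamma_det hg).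
move=> M hM.
have hD : (q%:Z %| \det M - 1)%Z by rewrite -eqz_mod_dvd; apply/eqP.
have HU : forall t, PP A q (U t).
  apply: (subgroup_one (F := U)) => //.
  - exact: U_add.
  - by rewrite mk1.
  - move=> s t h; apply: cg_mk => //; rewrite subrr ?dvdz0 //.
  - by move=> a c ha hc; apply: PP_U_diff.
have HL : forall t, PP A q (L t).
  apply: (subgroup_one (F := L)) => //.
  - exact: L_add.
  - by rewrite mk1.
  - move=> s t h; apply: cg_mk => //; rewrite subrr ?dvdz0 //.
  - by move=> a c ha hc; apply: PP_L_diff.
have [g [hg hc]] := euclid HU HL (leqnn _) hD.
exists g => // i j; apply/eqP; rewrite eqz_mod_dvd; exact: hc.
Qed.
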